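(* For every $n\ge1$ there is a general ordinal setting with $n$ agents and $m=n+1$ outcomes and a preference profile on which every outcome has rank-approximation factor at least $\min\{n,m-1\}$; consequently no deterministic mechanism for general ordinal settings can have rank-approximation factor better than $\min\{n,m-1\}$.
   Context: General ordinal setting: $n$ agents, $m$ outcomes; each agent has a strict total order $\succ_j$ on the outcomes (any strict order allowed). $\mathrm{rank}_i(o;\succ)$ is the number of agents having $o$ among their top $i$ outcomes; $\mathrm{maxrank}_i(\succ)=\max_o\mathrm{rank}_i(o;\succ)$. An outcome $o$ has rank-approximation factor $\alpha$ on $\succ$ if $\mathrm{rank}_i(o;\succ)\ge\mathrm{maxrank}_i(\succ)/\alpha$ for all $i\in[m]$; a deterministic mechanism has factor $\alpha$ if its output has factor $\alpha$ on every profile. *)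

(* Defs.v *)
From HB Require Import structures.
From mathcomp Require Import all_boot all_order all_algebra all_fingroup.
Set Implicit Arguments. Unset Strict Implicit. Unset Printing Implicit Defensive.
Import Order.TTheory GRing.Theory Num.Theory.

(* A strict total order of agent j on the outcomes is a permutation
   [P j : {perm 'I_m}] listing the outcomes from best to worst:
   [P j k] is the outcome agent j ranks at position k (0 = top). *)
Definition profile (n m : nat) := 'I_n -> {perm 'I_m}.

Definition pos n m (P : profile n m) (j : 'I_n) (o : 'I_m) : nat :=
  ((P j)^-1)%g o.

Definition rank n m (P : profile n m) (i : nat) (o : 'I_m) : nat :=
  #|[set j : 'I_n | (pos P j o < i)%N]|.

Definition maxrank n m (P : profile n m) (i : nat) : nat :=
  \max_(o : 'I_m) rank P i o.

Definition has_factor (R : realFieldType) n m (alpha : R) (P : profile n m)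
    (o : 'I_m) : Prop :=
  (0 < alpha)%R /\
  forall i : nat, (1 <= i <= m)%N ->
    (((maxrank P i)%:R / alpha <= (rank P i o)%:R :> R)%R).

Definition mechanism (n m : nat) := profile n m -> 'I_m.

Definition mech_has_factor (R : realFieldType) n m (alpha : R)
    (M : mechanism n m) : Prop :=
  forall P : profile n m, has_factor alpha P (M P).

(* Main.v *)
Require Import Defs.
From HB Require Import structures.
From mathcomp Require Import all_boot all_order all_algebra all_fingroup.
From mathcomp Require Import zify.
Import Order.TTheory GRing.Theory Num.Theory.
Local Open Scope ring_scope.

Section C.
Variable n : nat.
Hypothesis n1 : (1 <= n)%N.

Definition oN : 'I_n.+1 := ord_max.
Definition o1 : 'I_n.+1 := inord 1.
Definition o0 : 'I_n.+1 := ord0.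
Definition wj (j : 'I_n) : 'I_n.+1 := widen_ord (leqnSn n) j.

Definition Q (j : 'I_n) : {perm 'I_n.+1} := (tperm (wj j) o0 * tperm oN o1)%g.
Definition Pc : profile n n.+1 := fun j => ((Q j)^-1)%g.

Lemma posP j o : pos Pc j o = Q j o.
Proof. by rewrite /pos /Pc invgK. Qed.

Lemma wjN j : wj j != oN.
Proof. by rewrite -val_eqE /= neq_ltn ltn_ord. Qed.

Lemma Qj j : Q j (wj j) = o0.
Proof.
rewrite permM tpermL tpermD //; rewrite -val_eqE /= ?inordK //; lia.
Qed.

Lemma QN j : Q j oN = o1.
Proof.
have h : tperm (wj j) o0 oN = oN.
  rewrite tpermD //; first exact: wjN.
  by rewrite -val_eqE /= neq_ltn n1.
by rewrite permM h tpermL.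
Qed.

Lemma rankN1 : rank Pc 1 oN = 0%N.
Proof.
apply/eqP; rewrite cards_eq0; apply/eqP/setP => j.
by rewrite !inE posP QN /= inordK.
Qed.

Lemma rank01 : (1 <= rank Pc 1 o0)%N.
Proof.
rewrite card_gt0; apply/set0Pn; exists (Ordinal n1).
rewrite inE posP.
have -> : o0 = wj (Ordinal n1) by apply/val_inj.
by rewrite Qj.
Qed.

Lemma rankN2 : rank Pc 2 oN = n.
Proof.
rewrite /rank -[RHS](card_ord n); apply: eq_card => j.
by rewrite !inE posP QN /= inordK.
Qed.

Lemma rankj2 (j : 'I_n) : (rank Pc 2 (wj j) <= 1)%N.
Proof.
apply: leq_trans (_ : _ <= #|[set j]|)%N _; last by rewrite cards1.
apply: subset_leq_card; apply/subsetP => k.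
rewrite !inE posP => H.
have : (Q k (wj j) == Q k (wj k)) || (Q k (wj j) == Q k oN).
  rewrite Qj QN -!val_eqE /= inordK //; lia.
case/orP => /eqP /perm_inj e.
  by apply/eqP/val_inj; move: e => /(congr1 val).
by move: (wjN j); rewrite e eqxx.
Qed.

End C.

Theorem theorem15 (R : realFieldType) (n : nat) :
  (1 <= n)%N ->
  (exists P : profile n n.+1,
     forall (o : 'I_n.+1) (alpha : R), has_factor alpha P o ->
       (minn n (n.+1 - 1))%:R <= alpha)
  /\
  (forall (M : mechanism n n.+1) (alpha : R), mech_has_factor alpha M ->
       (minn n (n.+1 - 1))%:R <= alpha).
Proof.
move=> n1.
have key : forall (o : 'I_n.+1) (alpha : R), has_factor alpha (Pc n) o ->
       (minn n (n.+1 - 1))%:R <= alpha.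
  move=> o alpha [ap H].
  rewrite subn1 /= minnn.
  have [eo|neo] := eqVneq o (oN n).
    have := H 1%N (ltac:(by [])); rewrite eo (rankN1 n n1).
    rewrite ler_pdivrMr // mul0r => h.
    have hm : (1 <= maxrank (Pc n) 1)%N.
      apply: leq_trans (rank01 n n1) _.
      exact: (leq_bigmax (F := fun o => rank (Pc n) 1 o)).
    have h' : (maxrank (Pc n) 1)%:R <= (0%N)%:R :> R by [].
    by move: h'; rewrite ler_nat leqn0 => /eqP h0; move: hm; rewrite h0.
  have oj : (o < n)%N by move: neo; rewrite -val_eqE /= => h; have := ltn_ord o; lia.
  have E : o = wj n (Ordinal oj) by apply/val_inj.
  rewrite E in H.
  have := H 2%N (ltac:(rewrite /=; lia)).
  rewrite ler_pdivrMr // => h.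
  have hm : (n <= maxrank (Pc n) 2)%N.
    rewrite -{1}(rankN2 n n1); exact: (leq_bigmax (F := fun o => rank (Pc n) 2 o)).
  apply: le_trans (_ : (maxrank (Pc n) 2)%:R <= _); first by rewrite ler_nat.
  apply: (le_trans h).
  rewrite -{2}(mul1r alpha); apply: ler_wpM2r; first exact: ltW.
  have r1 := rankj2 n n1 (Ordinal oj).
  have r2 : (rank (Pc n) 2 (wj n (Ordinal oj)))%:R <= (1%N)%:R :> R by rewrite ler_nat.
  by move: r2; rewrite mulr1n.
split; first by exists (Pc n).
by move=> M alpha HM; apply: key (M (Pc n)) _ (HM _).
Qed.
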